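(* Let $H$ be a digraph and $\delta>0$. Then $G(H,\delta)$ is obtained when $x_1=x_2$. Hence \[ G(H,\delta)=\inf_{\substack{x\ge0,\ 0\le y_1,y_2\le1\\ y_1\vee y_2=1}}\{x(y_1+y_2): g_H(x,x,y_1,y_2)=1+\delta\}. \]
   Context: A digraph has no self-loops and at most one directed edge per ordered pair; degree = in-degree + out-degree; $\Delta$ is the maximum degree of $H$. $H^*$ is the induced subgraph on vertices of degree $\Delta$; $\mathcal S_H$ is the collection of independent sets of $H^*$ (including $\emptyset$). For $S\in\mathcal S_H$ let $T=\mathsf N(S)$ be the vertices outside $S$ adjacent in either direction to $S$, $\mathsf E(S,T)$ and $\mathsf E(T,S)$ the sets of edges from $S$ to $T$ and from $T$ to $S$, and $F_S$ the bipartite digraph on $S\cup T$ with edges $\mathsf E(S,T)\cup\mathsf E(T,S)$. A maximum fractional matching of $F_S$ is $w:\mathsf E(F_S)\to[0,1]$ with $\sum_{e\ni v}w(e)\le1$ for all vertices $v$ and equality for $v\in S$; $a_S=\max_w\sum_{e\in\mathsf E(S,T)}w(e)$, $b_S=\max_w\sum_{e\in\mathsf E(T,S)}w(e)$ over such $w$. $\mathsf v^+(S),\mathsf v^-(S),\mathsf v^{\pm}(S)$ are the numbers of vertices of $S$ with no in-neighbours, no out-neighbours, and both, respectively. \[ g_H(x_1,x_2,y_1,y_2)=\sum_{S\in\mathcal S_H}x_1^{\mathsf v^+(S)}x_2^{\mathsf v^-(S)}(x_1\wedge x_2)^{\mathsf v^{\pm}(S)}y_1^{a_S}y_2^{b_S},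 \] \[ G(H,\delta)=\inf_{x_1,x_2\ge0,\ 0\le y_1,y_2\le1}\{x_1y_1+x_2y_2:g_H(x_1,x_2,y_1,y_2)=1+\delta\}. \] ''Obtained when $x_1=x_2$'' means restricting the infimum to $x_1=x_2$ does not change its value. *)

(* Defs.v *)
From HB Require Import structures.
From mathcomp Require Import all_boot all_order all_algebra.
From mathcomp Require Import all_classical all_reals all_analysis.
Set Implicit Arguments. Unset Strict Implicit. Unset Printing Implicit Defensive.
Import Order.TTheory GRing.Theory Num.Theory.
Local Open Scope ring_scope.
Local Open Scope classical_set_scope.

(* A digraph on a finite vertex type V is a relation e : rel V
   (e u v = there is an edge u -> v); "no self-loops" is irreflexive e,
   "at most one edge per ordered pair" is automatic. *)
Section Digraph.
Variables (V : finType) (e : rel V).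

Definition outdeg (v : V) : nat := #|[set u | e v u]|.
Definition indeg (v : V) : nat := #|[set u | e u v]|.
Definition deg (v : V) : nat := (indeg v + outdeg v)%N.
Definition maxdeg : nat := \max_(v : V) deg v.
Definition Hstar : {set V} := [set v | deg v == maxdeg].
Definition indepHstar (S : {set V}) : bool :=
  (S \subset Hstar) && [forall u in S, forall v in S, ~~ e u v].
Definition nbhd (S : {set V}) : {set V} :=
  [set v | (v \notin S) && [exists u in S, e u v || e v u]].
Definition edgeF (S : {set V}) (u v : V) : bool :=
  e u v && (((u \in S) && (v \in nbhd S)) || ((u \in nbhd S) && (v \in S))).

Variable R : realType.

Definition wdeg (S : {set V}) (w : V -> V -> R) (v : V) : R :=
  \sum_(u | edgeF S v u) w v u + \sum_(u | edgeF S u v) w u v.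

Definition frac_matching (S : {set V}) (w : V -> V -> R) : Prop :=
  (forall u v, edgeF S u v -> 0 <= w u v <= 1) /\
  (forall v, wdeg S w v <= 1) /\
  (forall v, v \in S -> wdeg S w v = 1).

Definition wST (S : {set V}) (w : V -> V -> R) : R :=
  \sum_(u in S) \sum_(v in nbhd S | e u v) w u v.
Definition wTS (S : {set V}) (w : V -> V -> R) : R :=
  \sum_(u in nbhd S) \sum_(v in S | e u v) w u v.

(* a_S, b_S : maxima (the maxima are attained, the feasible set being a
   nonempty compact polytope, so sup = max) *)
Definition aS (S : {set V}) : R := sup [set wST S w | w in frac_matching S].
Definition bS (S : {set V}) : R := sup [set wTS S w | w in frac_matching S].

Definition vplus (S : {set V}) : nat := #|[set v in S | indeg v == 0%N]|.
Definition vminus (S : {set V}) : nat := #|[set v in S | outdeg v == 0%N]|.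
Definition vpm (S : {set V}) : nat :=
  #|[set v in S | (0 < indeg v)%N && (0 < outdeg v)%N]|.

(* g_H; real exponents via powR (with 0 `^ 0 = 1) *)
Definition gH (x1 x2 y1 y2 : R) : R :=
  \sum_(S : {set V} | indepHstar S)
    x1 ^+ vplus S * x2 ^+ vminus S * (Num.min x1 x2) ^+ vpm S
    * (y1 `^ aS S) * (y2 `^ bS S).

(* G(H, delta), as an extended real (inf of the empty set = +oo) *)
Definition GH (delta : R) : \bar R :=
  ereal_inf [set z : \bar R | exists x1 x2 y1 y2 : R,
    0 <= x1 /\ 0 <= x2 /\ 0 <= y1 <= 1 /\ 0 <= y2 <= 1 /\
    gH x1 x2 y1 y2 = 1 + delta /\ z = (x1 * y1 + x2 * y2)%:E].

End Digraph.

(* Main.v *)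
Require Import Defs.
From HB Require Import structures.
From mathcomp Require Import all_boot all_order all_algebra.
From mathcomp Require Import all_classical all_reals all_analysis.
From mathcomp Require Import ring lra.
Import Order.TTheory GRing.Theory Num.Theory.
Local Open Scope ring_scope.

Section T.
Variable R : realType.

Lemma powRD_ge0 (x r s : R) : 0 <= r -> 0 <= s -> x `^ (r + s) = x `^ r * x `^ s.
Proof.
move=> r0 s0; have [/eqP rs0|rs0] := eqVneq (r + s) 0.
  have r00 : r = 0 by lra.
  have s00 : s = 0 by lra.
  by rewrite r00 s00 addr0 powRr0 mulr1.
by rewrite powRD // (negbTE rs0).
Qed.

Lemma term_core (x1 x2 y1 y2 a b X : R) (p q r : nat) :
 0 <= x1 -> x1 <= x2 -> 0 <= y1 -> 0 <= y2 -> 0 < X -> X <= x2 ->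
 0 <= a -> a <= (p + r)%:R -> q%:R <= b -> (p+q+r)%:R <= a + b ->
 x1 ^+ p * x2 ^+ q * x1 ^+ r * y1 `^ a * y2 `^ b <=
 X ^+ p * X ^+ q * X ^+ r * (x1*y1/X) `^ a * (x2*y2/X) `^ b.
Proof.
move=> x10 x12 y10 y20 X0 Xx2 a0 hapr hqb hn.
have x20 : 0 <= x2 by lra.
have hXa : (x1*y1/X) `^ a * X `^ a = x1 `^ a * y1 `^ a.
  by rewrite -powRM ?divfK ?gt_eqF // ?powRM // ?divr_ge0 ?mulr_ge0 // ltW.
have hXb : (x2*y2/X) `^ b * X `^ b = x2 `^ b * y2 `^ b.
  by rewrite -powRM ?divfK ?gt_eqF // ?powRM // ?divr_ge0 ?mulr_ge0 // ltW.
have [al alE] : exists al, al = (p + r)%:R - a by eexists.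
have [ga gaE] : exists ga, ga = a + b - (p+q+r)%:R by eexists.
have al0 : 0 <= al by rewrite alE subr_ge0.
have ga0 : 0 <= ga by rewrite gaE subr_ge0.
have b0 : 0 <= b by apply: le_trans hqb.
have e1 : x1 ^+ p * x1 ^+ r = x1 `^ a * x1 `^ al.
  by rewrite -exprD -powR_mulrn // -powRD_ge0 // alE addrC subrK.
have e2 : x2 `^ b = x2 ^+ q * x2 `^ al * x2 `^ ga.
  rewrite {1}(_ : b = q%:R + al + ga); last by rewrite alE gaE !natrD; ring.
  by rewrite powRD_ge0 ?addr_ge0 // powRD_ge0 // powR_mulrn.
have e3 : X `^ a * X `^ b = X ^+ p * X ^+ q * X ^+ r * X `^ ga.
  rewrite -!exprD -powR_mulrn ?ltW // -!powRD_ge0 //; congr (_ `^ _).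
  rewrite gaE !natrD; ring.
have h1 : x1 `^ al <= x2 `^ al by apply: ge0_ler_powR.
have h2 : X `^ ga <= x2 `^ ga by apply: ge0_ler_powR; rewrite // nnegrE ltW.
have pa : 0 < X `^ a * X `^ b by rewrite mulr_gt0 ?powR_gt0.
rewrite -(ler_pM2r pa).
have -> : X ^+ p * X ^+ q * X ^+ r * (x1 * y1 / X) `^ a * (x2 * y2 / X) `^ b *
   (X `^ a * X `^ b) = X ^+ p * X ^+ q * X ^+ r *
   ((x1 * y1 / X) `^ a * X `^ a) * ((x2 * y2 / X) `^ b * X `^ b) by ring.
rewrite hXa hXb e2 e3.
have -> : x1 ^+ p * x2 ^+ q * x1 ^+ r * y1 `^ a * y2 `^ b * (X ^+ p * X ^+ q * X ^+ r * X `^ ga)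
  = (x1 ^+ p * x1 ^+ r) * x2 ^+ q * y1 `^ a * y2 `^ b * (X ^+ p * X ^+ q * X ^+ r * X `^ ga) by ring.
rewrite e1.
set K := x1 `^ a * x2 ^+ q * y1 `^ a * y2 `^ b * (X ^+ p * X ^+ q * X ^+ r).
have K0 : 0 <= K by rewrite /K !mulr_ge0 ?powR_ge0 ?exprn_ge0 // ltW.
rewrite -subr_ge0.
have -> : X ^+ p * X ^+ q * X ^+ r * (x1 `^ a * y1 `^ a) *
   (x2 ^+ q * x2 `^ al * x2 `^ ga * y2 `^ b) -
   x1 `^ a * x1 `^ al * x2 ^+ q * y1 `^ a * y2 `^ b * (X ^+ p * X ^+ q * X ^+ r * X `^ ga)
   = K * (x2 `^ al * x2 `^ ga - x1 `^ al * X `^ ga) by rewrite /K; ring.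
apply: mulr_ge0 => //; rewrite subr_ge0.
by apply: ler_pM => //; apply: powR_ge0.
Qed.

Lemma term_le (x1 x2 y1 y2 a b : R) (p q r : nat) :
 0 <= x1 -> 0 <= x2 -> 0 <= y1 <= 1 -> 0 <= y2 <= 1 ->
 p%:R <= a -> a <= (p + r)%:R -> q%:R <= b -> b <= (q + r)%:R ->
 (p+q+r)%:R <= a + b ->
 0 < Num.max (x1*y1) (x2*y2) ->
 x1 ^+ p * x2 ^+ q * Num.min x1 x2 ^+ r * y1 `^ a * y2 `^ b <=
 (Num.max (x1*y1) (x2*y2)) ^+ p * (Num.max (x1*y1) (x2*y2)) ^+ q *
 Num.min (Num.max (x1*y1) (x2*y2)) (Num.max (x1*y1) (x2*y2)) ^+ r *
 (x1*y1/(Num.max (x1*y1) (x2*y2))) `^ a * (x2*y2/(Num.max (x1*y1) (x2*y2))) `^ b.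
Proof.
move=> x10 x20 /andP[y10 y11] /andP[y20 y21] hpa hapr hqb hbqr hn.
set X := Num.max (x1*y1) (x2*y2) => X0.
rewrite minxx.
have pa : (p%:R : R) >= 0 by [].
have qb : (q%:R : R) >= 0 by [].
have a0 : 0 <= a by apply: le_trans hpa.
have b0 : 0 <= b by apply: le_trans hqb.
have [x12|x21] := leP x1 x2.
  idtac.
  apply: term_core => //.
  by rewrite /X ge_max; apply/andP; split; nra.
idtac.
have hX : X <= x1 by rewrite /X ge_max; apply/andP; split; nra.
have hn' : (q+p+r)%:R <= b + a by rewrite (addnC q p) addrC.
have H' := @term_core x2 x1 y2 y1 b a X q p r x20 (ltW x21) y20 y10 X0 hX b0 hbqr hpa hn'.
have -> : x1 ^+ p * x2 ^+ q * x2 ^+ r * y1 `^ a * y2 `^ b =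
   x2 ^+ q * x1 ^+ p * x2 ^+ r * y2 `^ b * y1 `^ a by ring.
have -> : X ^+ p * X ^+ q * X ^+ r * (x1 * y1 / X) `^ a * (x2 * y2 / X) `^ b =
   X ^+ q * X ^+ p * X ^+ r * (x2 * y2 / X) `^ b * (x1 * y1 / X) `^ a by ring.
exact: H'.
Qed.

End T.

Set Implicit Arguments. Unset Strict Implicit. Unset Printing Implicit Defensive.

Section G.
Variables (V : finType) (e : rel V) (R : realType).
Hypothesis Dpos : (0 < maxdeg e)%N.

Lemma inC (P : V -> bool) u : (u \in [set x | P x]%classic) = P u.
Proof. by apply/idP/idP; rewrite in_setE. Qed.

Definition outw (S : {set V}) (w : V -> V -> R) u := \sum_(v | edgeF e S u v) w u v.
Definition inw (S : {set V}) (w : V -> V -> R) u := \sum_(v | edgeF e S v u) w v u.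

Lemma nbhdF (S : {set V}) u : u \in S -> (u \in nbhd e S) = false.
Proof. by move=> uS; rewrite /nbhd inE uS. Qed.

Lemma edgeF_out (S : {set V}) u v : u \in S -> edgeF e S u v = (v \in nbhd e S) && e u v.
Proof. by move=> uS; rewrite /edgeF uS (nbhdF uS) /= orbF andbC. Qed.

Lemma edgeF_in (S : {set V}) u v : v \in S -> edgeF e S u v = (u \in nbhd e S) && e u v.
Proof. by move=> vS; rewrite /edgeF vS (nbhdF vS) andbF andbT /= andbC. Qed.

Lemma wST_out S w : wST e S w = \sum_(u in S) outw S w u.
Proof.
rewrite /wST; apply: eq_bigr => u uS; rewrite /outw; apply: eq_bigl => v.
by rewrite edgeF_out.
Qed.

Lemma wTS_in S w : wTS e S w = \sum_(v in S) inw S w v.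
Proof.
rewrite /wTS (exchange_big_dep (fun v => v \in S)) /=; last by move=> u v _ /andP[].
apply: eq_bigr => v vS; rewrite /inw; apply: eq_bigl => u.
by rewrite edgeF_in // vS.
Qed.

Lemma fm_facts S w u : frac_matching e S w -> u \in S ->
  [/\ 0 <= outw S w u, 0 <= inw S w u & outw S w u + inw S w u = 1].
Proof.
case=> hw [_ hS] uS; split.
- by apply: sumr_ge0 => v /hw /andP[].
- by apply: sumr_ge0 => v /hw /andP[].
- by have := hS u uS; rewrite /wdeg.
Qed.

Lemma inw0 S w u : indeg e u = 0%N -> inw S w u = 0.
Proof.
move=> h; rewrite /inw big1 // => v /andP[evu _].
have : (0 < indeg e u)%N by apply/card_gt0P; exists v; rewrite inE.
by rewrite h.
Qed.

Lemma outw0 S w u : outdeg e u = 0%N -> outw S w u = 0.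
Proof.
move=> h; rewrite /outw big1 // => v /andP[euv _].
have : (0 < outdeg e u)%N by apply/card_gt0P; exists v; rewrite inE.
by rewrite h.
Qed.

Lemma indep_no S u v : indepHstar e S -> u \in S -> v \in S -> e u v = false.
Proof.
case/andP=> _ /forallP /(_ u) => h uS vS.
move: h; rewrite uS /= => /forallP /(_ v); rewrite vS /=.
by move/negbTE.
Qed.

Lemma deg_pos S u : indepHstar e S -> u \in S ->
  ~~ ((indeg e u == 0%N) && (outdeg e u == 0%N)).
Proof.
move=> hS uS; have := hS; case/andP=> /fintype.subsetP sub _.
have := sub u uS; rewrite inE /deg => /eqP d.
apply/negP => /andP[/eqP i0 /eqP o0]; move: Dpos; by rewrite -d i0 o0.
Qed.

Lemma cardR (S : {set V}) (P : pred V) :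
  (#|[set v in S | P v]|)%:R = \sum_(v in S) ((P v)%:R : R).
Proof.
rewrite -sum1_card natr_sum [LHS]big_mkcond [RHS]big_mkcond /=.
apply: eq_bigr => v _; rewrite !inE.
by case: (v \in S); case: (P v).
Qed.

Lemma vertex_bounds S w u : indepHstar e S -> frac_matching e S w -> u \in S ->
  let i0 := (nat_of_bool (indeg e u == 0%N))%:R : R in
  let o0 := (nat_of_bool (outdeg e u == 0%N))%:R : R in
  let bo := (nat_of_bool ((0 < indeg e u) && (0 < outdeg e u))%N)%:R : R in
  [/\ i0 <= outw S w u <= i0 + bo, o0 <= inw S w u <= o0 + bo & i0 + o0 + bo = 1].
Proof.
move=> hS fw uS /=.
have [h1 h2 h3] := fm_facts fw uS.
have np := deg_pos hS uS.
have [iz|iz] := eqVneq (indeg e u) 0%N.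
  have o0 : (outdeg e u == 0%N) = false by move: np; rewrite iz eqxx /= => /negbTE.
  rewrite iz o0 /=; have hz := inw0 S w iz; split; lra.
have [oz|oz] := eqVneq (outdeg e u) 0%N.
  rewrite oz /= ?andbF /=; have hz := outw0 S w oz; split; lra.
rewrite !lt0n iz oz /=; split; lra.
Qed.

Lemma sum_bounds (S : {set V}) (w : V -> V -> R) : indepHstar e S -> frac_matching e S w ->
  [/\ (vplus e S)%:R <= wST e S w <= (vplus e S + vpm e S)%:R,
      (vminus e S)%:R <= wTS e S w <= (vminus e S + vpm e S)%:R
    & wST e S w + wTS e S w = (vplus e S + vminus e S + vpm e S)%:R].
Proof.
move=> hS fw.
rewrite wST_out wTS_in !natrD /vplus /vminus /vpm !cardR.
have hb := fun u (uS : u \in S) => vertex_bounds hS fw uS.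
split; first (apply/andP; split).
- by apply: ler_sum => u uS; have [/andP[]] := hb u uS.
- rewrite -big_split; apply: ler_sum => u uS; by have [/andP[]] := hb u uS.
- apply/andP; split.
    by apply: ler_sum => u uS; have [_ /andP[]] := hb u uS.
  rewrite -big_split; apply: ler_sum => u uS; by have [_ /andP[]] := hb u uS.
- rewrite -!big_split; apply: eq_bigr => u uS.
  have [_ _ h] := hb u uS; have [_ _ h2] := fm_facts fw uS; exact: (etrans h2 (esym h)).
Qed.

Lemma nbhd_out S u v : indepHstar e S -> u \in S -> e u v -> v \in nbhd e S.
Proof.
move=> hS uS euv; rewrite /nbhd inE; apply/andP; split.
  by apply/negP => vS; rewrite (indep_no hS uS vS) in euv.
by apply/existsP; exists u; rewrite uS euv.
Qed.

Lemma nbhd_in S u v : indepHstar e S -> v \in S -> e u v -> u \in nbhd e S.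
Proof.
move=> hS vS euv; rewrite /nbhd inE; apply/andP; split.
  by apply/negP => uS; rewrite (indep_no hS uS vS) in euv.
by apply/existsP; exists v; rewrite vS euv orbT.
Qed.

Definition w0 : V -> V -> R := fun _ _ => ((maxdeg e)%:R)^-1.

Lemma w0_fm S : indepHstar e S -> frac_matching e S w0.
Proof.
move=> hS.
have D0 : (0:R) < (maxdeg e)%:R by rewrite ltr0n.
have wd : forall v, wdeg e S w0 v =
    (#|[pred u | edgeF e S v u]| + #|[pred u | edgeF e S u v]|)%:R / (maxdeg e)%:R.
  have hs : forall (P : pred V) (c : R), \sum_(u | P u) c = #|[pred u | P u]|%:R * c.
    by move=> P c; rewrite sumr_const mulr_natl.
  move=> v; rewrite /wdeg /w0 (hs (fun u => edgeF e S v u)) (hs (fun u => edgeF e S u v)).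
  by rewrite natrD mulrDl.
have c1 : forall v, (#|[pred u | edgeF e S v u]| <= outdeg e v)%N.
  move=> v; apply: subset_leq_card; apply/fintype.subsetP => u.
  by rewrite inE inC /edgeF => /andP[].
have c2 : forall v, (#|[pred u | edgeF e S u v]| <= indeg e v)%N.
  move=> v; apply: subset_leq_card; apply/fintype.subsetP => u.
  by rewrite inE inC /edgeF => /andP[].
split.
  move=> u v _; rewrite /w0 invr_ge0 ler0n /= invf_le1 // ler1n //.
split.
  move=> v; rewrite wd ler_pdivrMr // mul1r ler_nat.
  apply: leq_trans (leq_bigmax v).
  by rewrite /deg addnC leq_add.
move=> v vS; rewrite wd.
have e1 : #|[pred u | edgeF e S v u]| = outdeg e v.
  apply: eq_card => u; rewrite inE edgeF_out //.
  by rewrite inC; case euv: (e v u); [rewrite (nbhd_out hS vS euv) | rewrite andbF].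
have e2 : #|[pred u | edgeF e S u v]| = indeg e v.
  apply: eq_card => u; rewrite inE edgeF_in //.
  by rewrite inC; case euv: (e u v); [rewrite (nbhd_in hS vS euv) | rewrite andbF].
rewrite e1 e2 addnC.
have : v \in Hstar e by case/andP: hS => /fintype.subsetP h _; apply: h.
rewrite inE /deg => /eqP ->.
by rewrite divff // gt_eqF.
Qed.

Lemma aS_bounds S : indepHstar e S ->
 [/\ (vplus e S)%:R <= aS e R S <= (vplus e S + vpm e S)%:R,
     (vminus e S)%:R <= bS e R S <= (vminus e S + vpm e S)%:R
   & (vplus e S + vminus e S + vpm e S)%:R <= aS e R S + bS e R S].
Proof.
move=> hS; have fw0 := w0_fm hS.
have [/andP[a1 a2] /andP[b1 b2] s0] := sum_bounds hS fw0.
have ubA : ubound [set wST e S w | w in @frac_matching V e R S] (vplus e S + vpm e S)%:R.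
  by rewrite /ubound /= => z [w fw <-]; have [/andP[_ ->] _ _] := sum_bounds hS fw.
have ubB : ubound [set wTS e S w | w in @frac_matching V e R S] (vminus e S + vpm e S)%:R.
  by rewrite /ubound /= => z [w fw <-]; have [_ /andP[_ ->] _] := sum_bounds hS fw.
have hA : wST e S w0 <= aS e R S.
  have /ubP := ub_le_sup (ex_intro _ _ ubA); apply; by exists w0.
have hB : wTS e S w0 <= bS e R S.
  have /ubP := ub_le_sup (ex_intro _ _ ubB); apply; by exists w0.
have hA' : aS e R S <= (vplus e S + vpm e S)%:R.
  by apply: ge_sup => //; exists (wST e S w0); exists w0.
have hB' : bS e R S <= (vminus e S + vpm e S)%:R.
  by apply: ge_sup => //; exists (wTS e S w0); exists w0.
split; [apply/andP; split|apply/andP; split|]; rewrite ?natrD; lra.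
Qed.

End G.

Import numFieldNormedType.Exports.
Section H.
Variable R : realType.
Lemma contsum (I : finType) (P : pred I) (n : I -> nat) (K : I -> R) :
  continuous (fun t : R => \sum_(i | P i) (t ^+ n i * K i)).
Proof.
apply: continuous_big => //.
  exact: add_continuous.
move=> i _ t.
apply: cvgMr_tmp; exact: exprn_continuous.
Qed.
About continuousM.
End H.

Import numFieldNormedType.Exports.
Set Implicit Arguments. Unset Strict Implicit. Unset Printing Implicit Defensive.

Section GG.
Variables (V : finType) (e : rel V) (R : realType).
Hypothesis Dpos : (0 < maxdeg e)%N.

Lemma classes S u : indepHstar e S -> u \in S ->
  [|| (0 < vplus e S)%N, (0 < vminus e S)%N | (0 < vpm e S)%N].
Proof.
move=> hS uS; have np := deg_pos Dpos hS uS.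
have [iz|iz] := eqVneq (indeg e u) 0%N.
  by apply/orP; left; apply/card_gt0P; exists u; rewrite inE uS iz.
have [oz|oz] := eqVneq (outdeg e u) 0%N.
  by apply/orP; right; apply/orP; left; apply/card_gt0P; exists u; rewrite inE uS oz.
apply/orP; right; apply/orP; right; apply/card_gt0P; exists u.
by rewrite inE uS !lt0n iz oz.
Qed.

Lemma z0 (n : nat) : (0 < n)%N -> (0:R) ^+ n = 0.
Proof. by case: n => // n _; rewrite exprS mul0r. Qed.

Lemma gH_le (x1 x2 y1 y2 : R) : 0 <= x1 -> 0 <= x2 -> 0 <= y1 <= 1 -> 0 <= y2 <= 1 ->
  0 < Num.max (x1*y1) (x2*y2) ->
  gH e x1 x2 y1 y2 <=
  gH e (Num.max (x1*y1) (x2*y2)) (Num.max (x1*y1) (x2*y2))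
     (x1*y1/(Num.max (x1*y1) (x2*y2))) (x2*y2/(Num.max (x1*y1) (x2*y2))).
Proof.
move=> x10 x20 y1I y2I X0; rewrite /gH; apply: ler_sum => S hS.
have [/andP[a1 a2] /andP[b1 b2] hn] := aS_bounds R Dpos hS.
exact: term_le.
Qed.

Lemma gH_zero (x1 x2 y1 y2 : R) : 0 <= x1 -> 0 <= x2 ->
  x1 * y1 = 0 -> x2 * y2 = 0 -> gH e x1 x2 y1 y2 = 1.
Proof.
move=> x10 x20 h1 h2.
have i0 : indepHstar e finset.set0.
  by rewrite /indepHstar finset.sub0set /=; apply/forallP => u; rewrite inE.
have c0 : forall P : pred V, #|[set v in (finset.set0 : {set V}) | P v]| = 0%N.
  by move=> P; apply: eq_card0 => v; rewrite !inE.
rewrite /gH (bigD1 finset.set0) //= big1 ?addr0.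
  have [/andP[a1 a2] /andP[b1 b2] _] := aS_bounds R Dpos i0.
  move: a1 a2 b1 b2; rewrite /vplus /vminus /vpm !c0 /= => a1 a2 b1 b2.
  have -> : aS e R finset.set0 = 0 by apply/eqP; rewrite eq_le a2 a1.
  have -> : bS e R finset.set0 = 0 by apply/eqP; rewrite eq_le b2 b1.
  by rewrite !expr0 !powRr0 !mulr1.
move=> S /andP[hS nS]; have /finset.set0Pn [u uS] := nS.
have [/andP[a1 a2] /andP[b1 b2] hn] := aS_bounds R Dpos hS.
move: h1 h2 => /eqP; rewrite mulf_eq0 => /orP h1 /eqP; rewrite mulf_eq0 => /orP h2.
have := classes hS uS => /or3P [hp|hq|hr].
- case: h1 => /eqP h1; rewrite h1.
    by rewrite z0 // !mul0r.
  have an : aS e R S != 0 by apply: lt0r_neq0; apply: lt_le_trans a1; rewrite ltr0n.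
  by rewrite powR0 // mulr0 mul0r.
- case: h2 => /eqP h2; rewrite h2.
    by rewrite (z0 hq) mulr0 !mul0r.
  have bn : bS e R S != 0 by apply: lt0r_neq0; apply: lt_le_trans b1; rewrite ltr0n.
  by rewrite powR0 // mulr0.
- have m0 : x1 = 0 \/ x2 = 0 -> Num.min x1 x2 = 0.
    case=> ->; [by rewrite min_l | by rewrite min_r].
  case: h1 => /eqP h1.
    by rewrite m0 ?z0 // ?mulr0 ?mul0r //; left.
  case: h2 => /eqP h2.
    by rewrite m0 ?z0 // ?mulr0 ?mul0r //; right.
  rewrite h1 h2.
  have [an|az] := eqVneq (aS e R S) 0.
    have bn : bS e R S != 0.
      apply: lt0r_neq0; move: hn; rewrite an !natrD => hn.
      have : (0:R) < (vpm e S)%:R by rewrite ltr0n.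
      have := ler0n R (vplus e S); have := ler0n R (vminus e S); lra.
    by rewrite (powR0 bn) mulr0.
  by rewrite (powR0 az) mulr0 mul0r.
Qed.

Lemma gH0 (y1 y2 : R) : gH e 0 0 y1 y2 = 1.
Proof. by apply: gH_zero; rewrite ?mul0r. Qed.

Lemma gH_cont (z1 z2 X : R) : continuous (fun t : R => gH e (t * X) (t * X) z1 z2).
Proof.
have -> : (fun t : R => gH e (t * X) (t * X) z1 z2) = (fun t =>
  \sum_(S | indepHstar e S) (t ^+ (vplus e S + vminus e S + vpm e S)
    * (X ^+ (vplus e S + vminus e S + vpm e S) * (z1 `^ aS e R S) * (z2 `^ bS e R S)))).
  apply: funext => t; rewrite /gH; apply: eq_bigr => S _.
  by rewrite minxx !exprMn !exprD; ring.
exact: contsum.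
Qed.

Lemma ivt_step (X z1 z2 d : R) : 0 < X -> 1 < d -> d <= gH e X X z1 z2 ->
  exists2 t, 0 <= t <= 1 & gH e (t * X) (t * X) z1 z2 = d.
Proof.
move=> X0 d1 dg.
have hc : ({within `[0, 1], continuous (fun t => gH e (t * X) (t * X) z1 z2)})%classic.
  by apply: continuous_subspaceT; exact: gH_cont.
have := @IVT R (fun t => gH e (t * X) (t * X) z1 z2) 0 1 d ler01 hc.
rewrite /= mul0r gH0 mul1r.
have h1 : 1 <= gH e X X z1 z2 by lra.
rewrite (min_l h1) (max_r h1) => /(_ ltac:(apply/andP; split; lra)) [t tI ft].
by exists t => //; move: tI; rewrite in_itv.
Qed.

End GG.

Import numFieldNormedType.Exports.
Set Implicit Arguments. Unset Strict Implicit. Unset Printing Implicit Defensive.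

Section MM.
Variables (V : finType) (e : rel V) (R : realType).
Hypothesis Dpos : (0 < maxdeg e)%N.

Lemma hm (a b : R) : 0 < Num.max a b ->
  Num.max (a / Num.max a b) (b / Num.max a b) = 1.
Proof.
case: (leP a b) => h m0.
  by rewrite divff ?gt_eqF // max_r // ler_pdivrMr // mul1r.
by rewrite divff ?gt_eqF // max_l // ler_pdivrMr // mul1r ltW.
Qed.

Lemma key (x1 x2 y1 y2 d : R) : 0 <= x1 -> 0 <= x2 -> 0 <= y1 <= 1 -> 0 <= y2 <= 1 ->
  gH e x1 x2 y1 y2 = d -> 1 < d ->
  exists x z1 z2, [/\ 0 <= x, (0 <= z1 <= 1) && (0 <= z2 <= 1), Num.max z1 z2 = 1,
     gH e x x z1 z2 = d & x * (z1 + z2) <= x1 * y1 + x2 * y2].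
Proof.
move=> x10 x20 /andP[y10 y11] /andP[y20 y21] hg d1.
have u10 : 0 <= x1 * y1 by apply: mulr_ge0.
have u20 : 0 <= x2 * y2 by apply: mulr_ge0.
have [X0|Xle] := ltP 0 (Num.max (x1*y1) (x2*y2)); last first.
  have h1 : x1 * y1 = 0 by move: Xle; rewrite ge_max => /andP[? ?]; lra.
  have h2 : x2 * y2 = 0 by move: Xle; rewrite ge_max => /andP[? ?]; lra.
  by move: hg; rewrite (gH_zero Dpos) // => h; lra.
have hle := gH_le Dpos x10 x20 (introT andP (conj y10 y11)) (introT andP (conj y20 y21)) X0.
move: hle X0; set X := Num.max (x1*y1) (x2*y2) => hle X0.
have [t /andP[t0 t1] ht] := ivt_step Dpos (z1:=x1*y1/X) (z2:=x2*y2/X) X0 d1 ltac:(lra).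
have hX1 : x1 * y1 <= X by rewrite /X le_max lexx.
have hX2 : x2 * y2 <= X by rewrite /X le_max lexx orbT.
exists (t * X), (x1*y1/X), (x2*y2/X); split.
- by rewrite mulr_ge0 // ltW.
- by rewrite !divr_ge0 ?(ltW X0) //= !ler_pdivrMr // !mul1r hX1 hX2.
- exact: hm.
- exact: ht.
- have -> : t * X * (x1 * y1 / X + x2 * y2 / X) = t * (x1 * y1 + x2 * y2).
    by rewrite -mulrA mulrDr !(mulrC X) !divfK ?gt_eqF.
  by rewrite ler_piMl ?addr_ge0.
Qed.

End MM.

Unset Implicit Arguments.
Local Open Scope classical_set_scope.

Theorem proposition5p5 (R : realType) (V : finType) (e : rel V)
  (e_irr : irreflexive e) (e_nonempty : exists u v, e u v)
  (delta : R) (delta_gt0 : 0 < delta) :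
  GH e delta =
    ereal_inf [set z : \bar R | exists x1 y1 y2 : R,
      0 <= x1 /\ 0 <= y1 <= 1 /\ 0 <= y2 <= 1 /\
      gH e x1 x1 y1 y2 = 1 + delta /\ z = (x1 * y1 + x1 * y2)%:E]
  /\
  GH e delta =
    ereal_inf [set z : \bar R | exists x y1 y2 : R,
      0 <= x /\ 0 <= y1 <= 1 /\ 0 <= y2 <= 1 /\ Num.max y1 y2 = 1 /\
      gH e x x y1 y2 = 1 + delta /\ z = (x * (y1 + y2))%:E].
Proof.
have Dpos : (0 < maxdeg e)%N.
  case: e_nonempty => u [v euv]; apply: leq_trans (leq_bigmax u).
  rewrite /deg; apply: leq_trans (leq_addl _ _).
  by apply/card_gt0P; exists v; rewrite inC.
have d1 : 1 < 1 + delta by lra.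
split; apply/eqP; rewrite eq_le; apply/andP; split.
- apply: le_ereal_inf_tmp; rewrite /lbound /= => z [x1 [y1 [y2 [hx [hy1 [hy2 [hg ->]]]]]]].
  apply: ge_ereal_inf; exists (x1 * y1 + x1 * y2)%:E => //.
  by exists x1, x1, y1, y2.
- apply: le_ereal_inf_tmp; rewrite /lbound /= => z.
  move=> [x1 [x2 [y1 [y2 [hx1 [hx2 [hy1 [hy2 [hg ->]]]]]]]]].
  have [x [z1 [z2 [h0 /andP[hz1 hz2] hm hg' hobj]]]] := key Dpos hx1 hx2 hy1 hy2 hg d1.
  apply: ge_ereal_inf; exists (x * z1 + x * z2)%:E.
    by exists x, z1, z2.
  by rewrite lee_fin -mulrDr.
- apply: le_ereal_inf_tmp; rewrite /lbound /= => z.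
  move=> [x [y1 [y2 [hx [hy1 [hy2 [hm [hg ->]]]]]]]].
  apply: ge_ereal_inf; exists (x * y1 + x * y2)%:E; last by rewrite mulrDr.
  by exists x, x, y1, y2.
- apply: le_ereal_inf_tmp; rewrite /lbound /= => z.
  move=> [x1 [x2 [y1 [y2 [hx1 [hx2 [hy1 [hy2 [hg ->]]]]]]]]].
  have [x [z1 [z2 [h0 /andP[hz1 hz2] hm hg' hobj]]]] := key Dpos hx1 hx2 hy1 hy2 hg d1.
  apply: ge_ereal_inf; exists (x * (z1 + z2))%:E.
    by exists x, z1, z2.
  by rewrite lee_fin.
Qed.
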